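(* Let $\mathsf{V}$ be a semilinear variety of pointed residuated lattices. Then for every quantifier-free $\mathcal{L}$-formula $\chi$, $\mathsf{V}_\rhd\models\chi$ if and only if $\mathsf{V}\models\chi$.
   Context: $\mathcal{L}=\{\wedge,\vee,\cdot,\backslash,/,\mathrm{e},0\}$. A pointed residuated lattice is an $\mathcal{L}$-algebra with $\langle A,\wedge,\vee\rangle$ a lattice (order $\le$), $\langle A,\cdot,\mathrm{e}\rangle$ a monoid, $0$ a constant, and $b\le a\backslash c\iff a\cdot b\le c\iff a\le c/b$. For a variety $\mathsf{V}$ of pointed residuated lattices, $\mathsf{V}^c$ is the class of its linearly ordered members; $\mathsf{V}$ is semilinear if it consists of the isomorphic copies of subalgebras of products of members of $\mathsf{V}^c$. $\mathsf{V}_\rhd$ is the variety, in the language $\mathcal{L}$ plus a binary symbol $\rhd$, generated by the members of $\mathsf{V}^c$ expanded with $x\rhd y:=y$ if $\mathrm{e}\le x$ and $x\rhd y:=\mathrm{e}$ otherwise. $\mathsf{K}\models\chi$ means every member of $\mathsf{K}$ satisfies $\chi$ under every assignment. *)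

(* Defs.v *)
Record LAlg := {
  car :> Type;
  a_meet : car -> car -> car;
  a_join : car -> car -> car;
  a_mul  : car -> car -> car;
  a_ldiv : car -> car -> car;   (* a_ldiv a c = a \ c *)
  a_rdiv : car -> car -> car;   (* a_rdiv c b = c / b *)
  a_e    : car;
  a_zero : car }.

Arguments a_meet {_}. Arguments a_join {_}. Arguments a_mul {_}.
Arguments a_ldiv {_}. Arguments a_rdiv {_}. Arguments a_e {_}. Arguments a_zero {_}.

Definition le (A : LAlg) (x y : A) : Prop := a_meet x y = x.

Definition isPRL (A : LAlg) : Prop :=
  (forall x y z : A, a_meet x (a_meet y z) = a_meet (a_meet x y) z) /\
  (forall x y z : A, a_join x (a_join y z) = a_join (a_join x y) z) /\
  (forall x y : A, a_meet x y = a_meet y x) /\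
  (forall x y : A, a_join x y = a_join y x) /\
  (forall x y : A, a_meet x (a_join x y) = x) /\
  (forall x y : A, a_join x (a_meet x y) = x) /\
  (forall x y z : A, a_mul x (a_mul y z) = a_mul (a_mul x y) z) /\
  (forall x : A, a_mul a_e x = x) /\
  (forall x : A, a_mul x a_e = x) /\
  (forall a b c : A,
      (le A b (a_ldiv a c) <-> le A (a_mul a b) c) /\
      (le A (a_mul a b) c <-> le A a (a_rdiv c b))).

Definition isChain (A : LAlg) : Prop := forall x y : A, le A x y \/ le A y x.

Record LTAlg := { red :> LAlg; a_tri : car red -> car red -> car red }.

Inductive term : Type :=
| TVar : nat -> term
| TMeet : term -> term -> term
| TJoin : term -> term -> term
| TMul : term -> term -> term
| TLdiv : term -> term -> term
| TRdiv : term -> term -> term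
| TE : term
| TZero : term.

Inductive termT : Type :=
| UVar : nat -> termT
| UMeet : termT -> termT -> termT
| UJoin : termT -> termT -> termT
| UMul : termT -> termT -> termT
| ULdiv : termT -> termT -> termT
| URdiv : termT -> termT -> termT
| UE : termT
| UZero : termT
| UTri : termT -> termT -> termT.

Fixpoint eval (A : LAlg) (v : nat -> car A) (t : term) : car A :=
  match t with
  | TVar n => v n
  | TMeet s u => a_meet (eval A v s) (eval A v u)
  | TJoin s u => a_join (eval A v s) (eval A v u)
  | TMul s u => a_mul (eval A v s) (eval A v u)
  | TLdiv s u => a_ldiv (eval A v s) (eval A v u)
  | TRdiv s u => a_rdiv (eval A v s) (eval A v u)
  | TE => a_e
  | TZero => a_zero
  end.

Fixpoint evalT (B : LTAlg) (v : nat -> car (red B)) (t : termT) : car (red B) :=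
  match t with
  | UVar n => v n
  | UMeet s u => a_meet (evalT B v s) (evalT B v u)
  | UJoin s u => a_join (evalT B v s) (evalT B v u)
  | UMul s u => a_mul (evalT B v s) (evalT B v u)
  | ULdiv s u => a_ldiv (evalT B v s) (evalT B v u)
  | URdiv s u => a_rdiv (evalT B v s) (evalT B v u)
  | UE => a_e
  | UZero => a_zero
  | UTri s u => a_tri B (evalT B v s) (evalT B v u)
  end.

Inductive form : Type :=
| FEq : term -> term -> form
| FTrue : form
| FFalse : form
| FNot : form -> form
| FAnd : form -> form -> form
| FOr : form -> form -> form
| FImp : form -> form -> form.

Fixpoint holds (A : LAlg) (v : nat -> car A) (f : form) : Prop :=
  match f with
  | FEq s t => eval A v s = eval A v t
  | FTrue => True
  | FFalse => False
  | FNot g => ~ holds A v g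
  | FAnd g h => holds A v g /\ holds A v h
  | FOr g h => holds A v g \/ holds A v h
  | FImp g h => holds A v g -> holds A v h
  end.

Definition models (K : LAlg -> Prop) (chi : form) : Prop :=
  forall A, K A -> forall v : nat -> car A, holds A v chi.

Definition variety_PRL (V : LAlg -> Prop) : Prop :=
  exists Sigma : term -> term -> Prop,
    forall A : LAlg, V A <->
      (isPRL A /\ forall s t, Sigma s t -> forall v : nat -> car A, eval A v s = eval A v t).

Definition chains (V : LAlg -> Prop) (A : LAlg) : Prop := V A /\ isChain A.

Definition is_hom (A B : LAlg) (h : car A -> car B) : Prop :=
  (forall x y, h (a_meet x y) = a_meet (h x) (h y)) /\
  (forall x y, h (a_join x y) = a_join (h x) (h y)) /\
  (forall x y, h (a_mul x y) = a_mul (h x) (h y)) /\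
  (forall x y, h (a_ldiv x y) = a_ldiv (h x) (h y)) /\
  (forall x y, h (a_rdiv x y) = a_rdiv (h x) (h y)) /\
  h a_e = a_e /\ h a_zero = a_zero.

Definition prodAlg (I : Type) (F : I -> LAlg) : LAlg := {|
  car := forall i, car (F i);
  a_meet := fun x y i => a_meet (x i) (y i);
  a_join := fun x y i => a_join (x i) (y i);
  a_mul := fun x y i => a_mul (x i) (y i);
  a_ldiv := fun x y i => a_ldiv (x i) (y i);
  a_rdiv := fun x y i => a_rdiv (x i) (y i);
  a_e := fun i => a_e;
  a_zero := fun i => a_zero |}.

(* V is semilinear: V consists of the isomorphic copies of subalgebras of
   products of members of V^c (= the algebras admitting an embedding,
   i.e. an injective homomorphism, into such a product). *)
Definition semilinear (V : LAlg -> Prop) : Prop :=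
  forall A : LAlg, V A <->
    exists (I : Type) (F : I -> LAlg) (h : car A -> car (prodAlg I F)),
      (forall i, chains V (F i)) /\
      (forall x y, h x = h y -> x = y) /\
      is_hom A (prodAlg I F) h.

Definition expanded_chain (V : LAlg -> Prop) (C : LTAlg) : Prop :=
  chains V (red C) /\
  forall x y : car (red C),
    (le (red C) a_e x -> a_tri C x y = y) /\
    (~ le (red C) a_e x -> a_tri C x y = a_e).

(* V_rhd : the variety generated by the expanded chains, i.e. the class of
   all L_rhd-algebras satisfying every L_rhd-equation valid in all
   expanded members of V^c (Birkhoff: HSP(K) = Mod(Id(K))). *)
Definition Vrhd (V : LAlg -> Prop) (B : LTAlg) : Prop :=
  forall s t : termT,
    (forall C, expanded_chain V C -> forall v : nat -> car (red C), evalT C v s = evalT C v t) ->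
    forall v : nat -> car (red B), evalT B v s = evalT B v t.

Definition modelsT (V : LAlg -> Prop) (chi : form) : Prop :=
  forall B : LTAlg, Vrhd V B -> forall v : nat -> car (red B), holds (red B) v chi.

(* Main.v *)
Require Import Defs.
From Stdlib Require Import ClassicalEpsilon FunctionalExtensionality.

Fixpoint emb (t : term) : termT :=
  match t with
  | TVar n => UVar n
  | TMeet s u => UMeet (emb s) (emb u)
  | TJoin s u => UJoin (emb s) (emb u)
  | TMul s u => UMul (emb s) (emb u)
  | TLdiv s u => ULdiv (emb s) (emb u)
  | TRdiv s u => URdiv (emb s) (emb u)
  | TE => UE
  | TZero => UZero
  end.

Lemma evalT_emb (B : LTAlg) v t : evalT B v (emb t) = eval (red B) v t.
Proof. induction t; simpl; congruence. Qed.

Lemma eval_hom (A B : LAlg) (h : car A -> car B) : is_hom A B h ->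
  forall v t, h (eval A v t) = eval B (fun n => h (v n)) t.
Proof.
  intros (H1&H2&H3&H4&H5&H6&H7) v t; induction t; simpl;
  rewrite ?H1, ?H2, ?H3, ?H4, ?H5, ?H6, ?H7; congruence.
Qed.

Lemma holds_emb (A B : LAlg) (h : car A -> car B) : is_hom A B h ->
  (forall x y, h x = h y -> x = y) ->
  forall v f, holds A v f <-> holds B (fun n => h (v n)) f.
Proof.
  intros Hh Hi v f; induction f; simpl; try tauto.
  rewrite <- !eval_hom by exact Hh. split; intro E; [congruence|auto].
Qed.

Definition val3 {A : Type} (x y z : A) (n : nat) : A :=
  match n with 0 => x | 1 => y | _ => z end.

Section PRLfacts.
Variable A : LAlg.
Hypothesis HA : isPRL A.

Lemma meet_idem (x : A) : a_meet x x = x.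
Proof.
  destruct HA as (_&_&_&_&Ab1&Ab2&_).
  rewrite <- (Ab2 x x) at 2. apply Ab1.
Qed.

Lemma le_meet_r (b x : A) : le A (a_meet b x) x.
Proof.
  destruct HA as (As&_). unfold le. rewrite <- As, meet_idem. reflexivity.
Qed.

Lemma le_join_r (c x : A) : le A x (a_join c x).
Proof.
  destruct HA as (_&_&_&Jc&Ab1&_). unfold le. rewrite Jc. apply Ab1.
Qed.

Lemma E1 (a b c : A) : a_meet (a_mul a (a_meet b (a_ldiv a c))) c = a_mul a (a_meet b (a_ldiv a c)).
Proof.
  destruct HA as (_&_&_&_&_&_&_&_&_&R).
  apply (proj1 (R _ _ _)). apply le_meet_r.
Qed.

Lemma E2 (a b c : A) : a_meet b (a_ldiv a (a_join c (a_mul a b))) = b.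
Proof.
  destruct HA as (_&_&_&_&_&_&_&_&_&R).
  apply (proj1 (R _ _ _)). apply le_join_r.
Qed.

Lemma E3 (a b c : A) : a_meet (a_mul (a_meet a (a_rdiv c b)) b) c = a_mul (a_meet a (a_rdiv c b)) b.
Proof.
  destruct HA as (_&_&_&_&_&_&_&_&_&R).
  apply (proj2 (R _ _ _)). apply le_meet_r.
Qed.

Lemma E4 (a b c : A) : a_meet a (a_rdiv (a_join c (a_mul a b)) b) = a.
Proof.
  destruct HA as (_&_&_&_&_&_&_&_&_&R).
  apply (proj2 (R _ _ _)). apply le_join_r.
Qed.
End PRLfacts.

Section Main.
Variable V : LAlg -> Prop.
Hypothesis HV : variety_PRL V.

Lemma chainPRL C : expanded_chain V C -> isPRL (red C).
Proof.
  intros [[HC _] _]. destruct HV as [S HS]. apply HS in HC. tauto.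
Qed.

Lemma transfer (s t : term) :
  (forall A, V A -> forall v, eval A v s = eval A v t) ->
  forall B, Vrhd V B -> forall v, eval (red B) v s = eval (red B) v t.
Proof.
  intros H B HB v. rewrite <- !evalT_emb. apply HB.
  intros C HC w. rewrite !evalT_emb. apply H. apply HC.
Qed.

Lemma V_PRL A : V A -> isPRL A.
Proof. intros HA. destruct HV as [S HS]. apply HS in HA. tauto. Qed.

Lemma Vrhd_PRL B : Vrhd V B -> isPRL (red B).
Proof.
  intros HB.
  assert (G : forall s t, (forall A, isPRL A -> forall v, eval A v s = eval A v t) ->
     forall x y z, eval (red B) (val3 x y z) s = eval (red B) (val3 x y z) t)
    by (intros s t H x y z; apply transfer; auto; intros A HA w; apply H, V_PRL, HA).
  set (X := TVar 0). set (Y := TVar 1). set (Z := TVar 2).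
  assert (M : forall x y z : red B, a_meet x (a_meet y z) = a_meet (a_meet x y) z)
    by (intros x y z; apply (G (TMeet X (TMeet Y Z)) (TMeet (TMeet X Y) Z));
        intros A HA w; apply HA).
  assert (J : forall x y z : red B, a_join x (a_join y z) = a_join (a_join x y) z)
    by (intros x y z; apply (G (TJoin X (TJoin Y Z)) (TJoin (TJoin X Y) Z));
        intros A HA w; apply HA).
  assert (Mc : forall x y : red B, a_meet x y = a_meet y x)
    by (intros x y; apply (G (TMeet X Y) (TMeet Y X) ltac:(intros A HA w; apply HA) x y x)).
  assert (Jc : forall x y : red B, a_join x y = a_join y x)
    by (intros x y; apply (G (TJoin X Y) (TJoin Y X) ltac:(intros A HA w; apply HA) x y x)).
  assert (A1 : forall x y : red B, a_meet x (a_join x y) = x)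
    by (intros x y; apply (G (TMeet X (TJoin X Y)) X ltac:(intros A HA w; apply HA) x y x)).
  assert (A2 : forall x y : red B, a_join x (a_meet x y) = x)
    by (intros x y; apply (G (TJoin X (TMeet X Y)) X ltac:(intros A HA w; apply HA) x y x)).
  assert (Ma : forall x y z : red B, a_mul x (a_mul y z) = a_mul (a_mul x y) z)
    by (intros x y z; apply (G (TMul X (TMul Y Z)) (TMul (TMul X Y) Z));
        intros A HA w; apply HA).
  assert (Ml : forall x : red B, a_mul a_e x = x)
    by (intros x; apply (G (TMul TE X) X ltac:(intros A HA w; apply HA) x x x)).
  assert (Mr : forall x : red B, a_mul x a_e = x)
    by (intros x; apply (G (TMul X TE) X ltac:(intros A HA w; apply HA) x x x)).
  assert (F1 : forall a b c : red B, a_meet (a_mul a (a_meet b (a_ldiv a c))) c = a_mul a (a_meet b (a_ldiv a c)))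
    by (intros a b c; apply (G (TMeet (TMul X (TMeet Y (TLdiv X Z))) Z) (TMul X (TMeet Y (TLdiv X Z))));
        intros A HA w; apply E1; auto).
  assert (F2 : forall a b c : red B, a_meet b (a_ldiv a (a_join c (a_mul a b))) = b)
    by (intros a b c; apply (G (TMeet Y (TLdiv X (TJoin Z (TMul X Y)))) Y);
        intros A HA w; apply E2; auto).
  assert (F3 : forall a b c : red B, a_meet (a_mul (a_meet a (a_rdiv c b)) b) c = a_mul (a_meet a (a_rdiv c b)) b)
    by (intros a b c; apply (G (TMeet (TMul (TMeet X (TRdiv Z Y)) Y) Z) (TMul (TMeet X (TRdiv Z Y)) Y));
        intros A HA w; apply E3; auto).
  assert (F4 : forall a b c : red B, a_meet a (a_rdiv (a_join c (a_mul a b)) b) = a)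
    by (intros a b c; apply (G (TMeet X (TRdiv (TJoin Z (TMul X Y)) Y)) X);
        intros A HA w; apply E4; auto).
  assert (JL : forall c d : red B, a_meet d c = d -> a_join c d = c)
    by (intros c d E; rewrite <- E at 1; rewrite Mc; apply A2).
  repeat split; auto; unfold le; intro E.
  - rewrite <- E. apply F1.
  - rewrite <- (JL _ _ E). apply F2.
  - rewrite <- (JL _ _ E). apply F4.
  - rewrite <- E. apply F3.
Qed.

Lemma Vrhd_V B : Vrhd V B -> V (red B).
Proof.
  intros HB. destruct HV as [S HS]. apply HS. split.
  - apply Vrhd_PRL; auto.
  - intros s t Hst v. apply transfer; auto.
    intros A HA w. apply HS in HA. apply HA, Hst.
Qed.

End Main.

Definition triI (C : LAlg) (a b : car C) : car C :=
  if excluded_middle_informative (le C a_e a) then b else a_e.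

Definition expC (C : LAlg) : LTAlg := {| red := C; a_tri := triI C |}.

Definition expProd (I : Type) (F : I -> LAlg) : LTAlg :=
  {| red := prodAlg I F; a_tri := fun x y i => triI (F i) (x i) (y i) |}.

Lemma evalT_proj I F v t i :
  evalT (expProd I F) v t i = evalT (expC (F i)) (fun n => v n i) t.
Proof. induction t; simpl; try congruence. Qed.

Lemma expC_chain V C : chains V C -> expanded_chain V (expC C).
Proof.
  intros H; split; [exact H|]. intros x y; simpl; unfold triI.
  destruct (excluded_middle_informative _); tauto.
Qed.

Lemma expProd_Vrhd V I F : (forall i, chains V (F i)) -> Vrhd V (expProd I F).
Proof.
  intros H s t Hst v. apply functional_extensionality_dep; intro i.
  rewrite !evalT_proj. apply (Hst (expC (F i))). apply expC_chain, H.
Qed.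

Theorem proposition7p1 (V : LAlg -> Prop) :
  variety_PRL V -> semilinear V ->
  forall chi : form, modelsT V chi <-> models V chi.
Proof.
  intros HV HS chi; split.
  - intros H A HA v. apply HS in HA. destruct HA as (I & F & h & Hc & Hi & Hh).
    apply (holds_emb _ _ h Hh Hi).
    exact (H (expProd I F) (expProd_Vrhd V I F Hc) _).
  - intros H B HB v. apply H. apply Vrhd_V; auto.
Qed.
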